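(* Let $\bar L$ and $K$ be positive integers with $K\le \bar L/2$. Consider the following procedure producing, for $n=1,\dots,K$, a list of $n$ positive integers $L^{(n)}_1\le\cdots\le L^{(n)}_n$ (sorted ascending). For $n=1$: $L^{(1)}_1=2^{\lfloor\log_2\bar L\rfloor}$. For $n\ge2$: let $r^{(n-1)}=\bar L-\sum_{k=1}^{n-1}L^{(n-1)}_k$. If $r^{(n-1)}\ge L^{(n-1)}_{n-1}/2$, keep all previous lengths and add a new length $2^{\lfloor\log_2 r^{(n-1)}\rfloor}$; otherwise replace the largest length $L^{(n-1)}_{n-1}$ by two lengths each equal to $L^{(n-1)}_{n-1}/2$, keeping the others. Then sort the resulting $n$ lengths ascending to obtain $L^{(n)}_1\le\dots\le L^{(n)}_n$. Then the final lengths $L_k=L^{(K)}_k$, $k=1,\dots,K$, are all powers of $2$, satisfy $\sum_{k=1}^K L_k\le\bar L$, and maximize $\sum_{k=1}^K\lfloor\log_2 L_k\rfloor$ over all $K$-tuples of positive integers $(L_1,\dots,L_K)$ with $\sum_{k=1}^K L_k\le\bar L$.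
   Context: This procedure partitions (a truncation of) a dictionary matrix with $\bar L$ columns into $K$ subblocks of sizes $L_1,\dots,L_K$; in subblock sparse coding, the number of bits carried by the support is $\sum_{k=1}^K\lfloor\log_2 L_k\rfloor$. *)

(* Defs.v *)
From mathcomp Require Import all_boot.
Set Implicit Arguments. Unset Strict Implicit. Unset Printing Implicit Defensive.

Definition flog2 (n : nat) : nat := trunc_log 2 n.

Definition alloc_step (Lbar : nat) (s : seq nat) : seq nat :=
  let r := Lbar - sumn s in
  let Lmax := last 0 s in
  if Lmax <= 2 * r                   (* r >= Lmax / 2 *)
  then sort leq (rcons s (2 ^ flog2 r))
  else sort leq (take (size s).-1 s ++ [:: Lmax %/ 2; Lmax %/ 2]).

(* alloc Lbar n = the list L^(n) (for n >= 1); alloc Lbar 0 = [::] unused. *)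
Fixpoint alloc (Lbar n : nat) : seq nat :=
  match n with
  | 0 => [::]
  | 1 => [:: 2 ^ flog2 Lbar]
  | m.+1 => alloc_step Lbar (alloc Lbar m)
  end.

(* Main.v *)
Require Import Defs.
From mathcomp Require Import all_boot.
From mathcomp Require Import zify.

Lemma path_last_max (x0 : nat) (s : seq nat) :
  path leq x0 s -> all (fun y => y <= last x0 s) (x0 :: s).
Proof.
elim: s x0 => [|y s IH] x0 /=; first by rewrite leqnn.
move=> /andP[h1 h2]; have := IH y h2 => /= /andP[h3 ->].
by rewrite (leq_trans h1 h3) h3.
Qed.

Lemma sorted_last_max (s : seq nat) x :
  sorted leq s -> x \in s -> x <= last 0 s.
Proof.
case: s => [|y s] //= hp hx.
by have /allP := @path_last_max _ _ hp; apply.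
Qed.

Lemma sumn_le1 (s : seq nat) : (forall y, y \in s -> y <= 1) -> sumn s <= size s.
Proof.
elim: s => [|y s IH] //= h.
have h1 := h y (mem_head _ _).
have h2 : sumn s <= size s by apply: IH => z hz; apply: h; rewrite in_cons hz orbT.
lia.
Qed.

Definition Inv (Lbar a : nat) (s : seq nat) :=
  [/\ sorted leq s, all (fun x => (x == 2 ^ a) || (x == 2 ^ a.+1)) s,
      sumn s <= Lbar & Lbar < sumn s + 2 ^ a].

Lemma flog_pow a : flog2 (2 ^ a) = a.
Proof. by rewrite /flog2 trunc_expnK. Qed.

Lemma Inv_sort Lbar a s :
  all (fun x => (x == 2 ^ a) || (x == 2 ^ a.+1)) s ->
  sumn s <= Lbar -> Lbar < sumn s + 2 ^ a -> Inv Lbar a (sort leq s).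
Proof.
move=> h1 h2 h3; have hp : perm_eq (sort leq s) s by rewrite perm_sort.
split; first exact: (sort_sorted leq_total).
- by rewrite (perm_all _ hp).
- by rewrite (perm_sumn hp).
- by rewrite (perm_sumn hp).
Qed.

Lemma step_inv Lbar a s :
  Inv Lbar a s -> 0 < size s -> (size s).+1 <= Lbar %/ 2 ->
  exists a', Inv Lbar a' (alloc_step Lbar s) /\
             size (alloc_step Lbar s) = (size s).+1.
Proof.
case=> hs hall hsum hlt hsz hK.
have hmax : forall x, x \in s -> x <= last 0 s by move=> x; exact: sorted_last_max.
move: hs hall hsum hlt hsz hK hmax.
case/lastP: s => [|s' x] //= hs hall hsum hlt _ hK hmax.
rewrite last_rcons in hmax.
have hx : (x == 2 ^ a) || (x == 2 ^ a.+1).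
  by move/allP: hall; apply; rewrite mem_rcons mem_head.
have hall' : all (fun x => (x == 2 ^ a) || (x == 2 ^ a.+1)) s'.
  by move: hall; rewrite all_rcons => /andP[].
rewrite sumn_rcons in hsum hlt.
rewrite size_rcons in hK.
have hpa := expn_gt0 2 a.
have ht : take (size s') (rcons s' x) = s' by rewrite -cats1 take_size_cat.
rewrite /alloc_step last_rcons sumn_rcons size_rcons /= ht.
clear hall.
case: ifP => hc.
-
  have ex : x = 2 ^ a.
    case/orP: hx => /eqP // ex; rewrite expnS in ex; lia.
  case: a hpa hall' hx hlt ex => [|a] hpa hall' hx hlt ex.
    by rewrite expn0 in ex hlt; lia.
  have hr : 2 ^ a <= Lbar - (sumn s' + x) < 2 ^ a.+1.
    by rewrite expnS in ex hlt *; lia.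
  have hfl : flog2 (Lbar - (sumn s' + x)) = a by rewrite /flog2 (trunc_log_eq _ hr).
  rewrite hfl.
  exists a; split; last by rewrite size_sort size_rcons size_rcons.
  apply: Inv_sort.
  + rewrite !all_rcons ex !eqxx !orbT /=.
    apply/allP => y hy.
    have hy' : y \in rcons s' x by rewrite mem_rcons in_cons hy orbT.
    have := hmax y hy'; move/allP: hall' => /(_ y hy) /orP [] /eqP ->.
      rewrite ex expnS; lia.
    rewrite ex !expnS; lia.
  + rewrite sumn_rcons sumn_rcons; lia.
  + rewrite sumn_rcons sumn_rcons; rewrite expnS in ex hr *; lia.
-
  case/orP: hx => /eqP ex.
  + case: a hpa hall' hlt ex => [|a] hpa hall' hlt ex.
    * (* all ones: contradiction *)
      exfalso.
      have hs1 : sumn s' <= size s'.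
        apply: sumn_le1 => y hy.
        have := hmax y; rewrite mem_rcons in_cons hy orbT ex expn0 => /(_ isT) //.
      move/negbT: hc; rewrite -ltnNge ex expn0 => hc.
      lia.
    * have hh : x %/ 2 = 2 ^ a by rewrite ex expnS mulKn.
      rewrite hh.
      exists a; split; last by rewrite size_sort size_cat /=; lia.
      apply: Inv_sort.
      -- rewrite all_cat /= eqxx /=.
         apply/andP; split => //.
         apply/allP => y hy.
         have hy' : y \in rcons s' x by rewrite mem_rcons in_cons hy orbT.
         have := hmax y hy'; move/allP: hall' => /(_ y hy) /orP [] /eqP ->.
           by rewrite eqxx orbT.
         rewrite ex !expnS; lia.
      -- rewrite sumn_cat /= ex expnS in hsum *; lia.
      -- move/negbT: hc; rewrite -ltnNge => hc; rewrite sumn_cat /= ex expnS in hlt hc *; lia.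
  + have hh : x %/ 2 = 2 ^ a by rewrite ex expnS mulKn.
    rewrite hh.
    exists a; split; last by rewrite size_sort size_cat /=; lia.
    apply: Inv_sort.
    * by rewrite all_cat /= eqxx hall'.
    * rewrite sumn_cat /= ex expnS in hsum *; lia.
    * rewrite sumn_cat /= ex expnS in hlt *; lia.
Qed.


Lemma alloc_inv Lbar n : 0 < n -> n <= Lbar %/ 2 -> 0 < Lbar ->
  exists a, Inv Lbar a (alloc Lbar n) /\ size (alloc Lbar n) = n.
Proof.
elim: n => [|n IH] // _ hn hL.
case: n IH hn => [|n] IH hn.
  exists (flog2 Lbar); split => //.
  have h1 := @trunc_logP 2 Lbar isT hL.
  have h2 := @trunc_log_ltn 2 Lbar isT.
  rewrite /flog2 in h1 h2 *.
  split => //=; first by rewrite eqxx.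
    by rewrite addn0.
  rewrite addn0 /flog2; rewrite expnS in h2; lia.
have [a [hI hs]] := IH isT (ltnW hn) hL.
change (alloc Lbar n.+2) with (alloc_step Lbar (alloc Lbar n.+1)).
by have := @step_inv Lbar a _ hI; rewrite hs; apply.
Qed.

Lemma key_ineq f a : 2 ^ a * (f + 1) <= 2 ^ f + a * 2 ^ a.
Proof.
case: (leqP f a) => h.
  rewrite addn1 mulnC.
  case: (ltnP f a) => h'.
    have : f.+1 * 2 ^ a <= a * 2 ^ a by rewrite leq_mul2r h' orbT.
    lia.
  have -> : f = a by lia.
  rewrite mulSn; lia.
have -> : f = a + (f - a).-1.+1 by lia.
set d := (f - a).-1.
rewrite expnD.
have hd := @ltn_expl 2 d.+1 isT.
have : 2 ^ a * d.+2 <= 2 ^ a * 2 ^ d.+1 by rewrite leq_mul2l hd orbT.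
rewrite !mulnDr; nia.
Qed.

Lemma pt_ineq a x : 0 < x -> 2 ^ a * (flog2 x + 1) <= x + a * 2 ^ a.
Proof.
move=> hx; have := key_ineq (flog2 x) a.
have := @trunc_logP 2 x isT hx; rewrite /flog2; lia.
Qed.

Lemma sum_t a (t : seq nat) : all (fun x => 0 < x) t ->
  2 ^ a * (sumn (map flog2 t) + size t) <= sumn t + size t * (a * 2 ^ a).
Proof.
elim: t => [|x t IH] /=; first by move=> _; rewrite addn0 muln0.
move=> /andP[hx ht].
have := @pt_ineq a x hx; have := IH ht.
rewrite !mulnDr ?mulnDl ?mulSn; nia.
Qed.

Lemma sum_L a (L : seq nat) : all (fun x => (x == 2 ^ a) || (x == 2 ^ a.+1)) L ->
  sumn L + size L * (a * 2 ^ a) = 2 ^ a * (sumn (map flog2 L) + size L).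
Proof.
elim: L => [|x L IH] //=; first by rewrite muln0.
move=> /andP[/orP[] /eqP -> hL]; rewrite ?flog_pow; have := IH hL;
  rewrite ?expnS !mulnDr ?mulnDl ?mulSn; nia.
Qed.

Theorem mainTheorem2 (Lbar K : nat) :
  0 < Lbar -> 0 < K -> K <= Lbar %/ 2 ->
  let L := alloc Lbar K in
  [/\ size L = K,
      (forall x, x \in L -> exists e, x = 2 ^ e),
      sumn L <= Lbar &
      forall t : seq nat, size t = K -> all (fun x => 0 < x) t -> sumn t <= Lbar ->
        sumn (map flog2 t) <= sumn (map flog2 L)].
Proof.
move=> hL hK hK2 L.
have [a [[_ hall hsum hlt] hs]] := @alloc_inv Lbar K hK hK2 hL.
split => //.
- move=> x hx; move/allP: hall => /(_ x hx) /orP[] /eqP ->; eexists; reflexivity.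
- move=> t hts htp htsum.
  have h1 := @sum_t a t htp.
  have h2 := @sum_L a _ hall.
  rewrite hts in h1; rewrite hs in h2.
  have h3 : 2 ^ a * (sumn (map flog2 t) + K) < 2 ^ a * (sumn (map flog2 L) + K + 1).
    rewrite (mulnDr _ _ 1) muln1 -h2; lia.
  rewrite ltn_pmul2l ?expn_gt0 // in h3; lia.
Qed.
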